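(* Let $G$ be a graph and let $A$ and $B$ be disjoint subsets of $V(G)$ such that every vertex of $A$ is adjacent in $G$ to every vertex of $B$. Let $P_A$ be a path in $G[A]$ and $P_B$ a path in $G[B]$, both non-empty. If \[|B\setminus V(P_B)|\le |A\setminus V(P_A)|\le |B|-1,\] then $G[A\cup B]$ has a cycle whose vertex set is $A\cup B$.
   Context: Paths may consist of a single vertex. A single vertex and a single edge are also considered to be cycles. *)

(* Defs.v *)
(* A (finite, simple) graph G is a symmetric irreflexive
   relation e on a finType T. *)
From mathcomp Require Import all_boot.
Set Implicit Arguments. Unset Strict Implicit. Unset Printing Implicit Defensive.

Definition is_path (T : eqType) (e : rel T) (p : seq T) : bool :=
  match p with
  | [::] => false
  | x :: q => path e x q && uniq p
  end.

(* By convention a single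
   vertex and a single edge are also cycles (for [:: x; y], [cycle e] just
   asks e x y && e y x). *)
Definition is_cycle (T : eqType) (e : rel T) (c : seq T) : bool :=
  uniq c && ((size c == 1) || ((1 < size c) && cycle e c)).

(* Main.v *)
Require Import Defs.
From mathcomp Require Import all_boot zify.
Set Implicit Arguments. Unset Strict Implicit.

Definition alt (T : Type) (xs bs : seq T) :=
  flatten [seq [:: p.1; p.2] | p <- zip xs bs].

Lemma alt_path (T : eqType) (e : rel T) (inA inB : pred T)
  (hab : forall a b, inA a -> inB b -> e a b && e b a) :
  forall xs bs x, inB x -> all inA xs -> all inB bs -> size xs = size bs ->
  path e x (alt xs bs) && inB (last x (alt xs bs)).
Proof.
elim=> [|a xs IH] [|b bs] x //= hx /andP[ha hxs] /andP[hb hbs] [hs].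
rewrite /alt /= -/(alt xs bs).
have /andP[h1 h2] := hab a x ha hx.
have /andP[h3 h4] := hab a b ha hb.
by rewrite h2 h3 /=; apply: IH.
Qed.

Lemma alt_perm (T : eqType) : forall (xs bs : seq T), size xs = size bs ->
  perm_eq (alt xs bs) (xs ++ bs).
Proof.
elim=> [|a xs IH] [|b bs] //= [hs].
rewrite /alt /= -/(alt xs bs) perm_cons perm_sym -cat1s perm_catCA cat1s perm_cons perm_sym.
exact: IH.
Qed.
Unset Implicit Arguments.
Theorem lemma3p3 (T : finType) (e : rel T)
    (e_sym : symmetric e) (e_irr : irreflexive e)
    (A B : {set T})
    (hAB : [disjoint A & B])
    (hcomplete : forall a b, a \in A -> b \in B -> e a b)
    (PA PB : seq T)
    (hPA : is_path e PA) (hPAin : {subset PA <= A})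
    (hPB : is_path e PB) (hPBin : {subset PB <= B})
    (h1 : #|B :\: [set x in PB]| <= #|A :\: [set x in PA]|)
    (h2 : #|A :\: [set x in PA]| <= #|B| - 1) :
  exists c : seq T, is_cycle e c /\ {subset c <= A :|: B} /\ [set x in c] = A :|: B.
Proof.
case: PA hPA hPAin h1 h2 => [|pa pa'] //= /andP[pPA uPA] hPAin h1 h2.
case: PB hPB hPBin h1 h2 => [|q pb'] //= /andP[pPB uPB] hPBin h1 h2.
set xs := enum (A :\: [set x in pa :: pa']).
set ys := enum (B :\: [set x in q :: pb']).
set s := (q :: pb') ++ ys.
have dis : forall x, x \in A -> x \in B -> False.
  by move=> x xA xB; move: (disjointFr hAB xA); rewrite xB.
have memxs : forall x, (x \in xs) = (x \in A) && (x \notin pa :: pa').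
  by move=> x; rewrite mem_enum !inE andbC.
have memys : forall x, (x \in ys) = (x \in B) && (x \notin q :: pb').
  by move=> x; rewrite mem_enum !inE andbC.
have us : uniq s.
  rewrite cat_uniq; apply/and3P; split => //; last exact: enum_uniq.
  apply/hasPn => x; rewrite memys.
  by case/andP.
have ms : s =i B.
  move=> x; rewrite mem_cat memys; case: (boolP (x \in q :: pb')) => h /=.
    by rewrite (hPBin _ h). by rewrite andbT.
have sizes : size s = #|B|.
  by rewrite -(card_uniqP us); apply: eq_card.
have sizexs : size xs = #|A :\: [set x in pa :: pa']| by rewrite -cardE.
have sizeys : size ys = #|B :\: [set x in q :: pb']| by rewrite -cardE.
set m := size s - size xs.
have Bpos : 0 < #|B|.
  by apply/card_gt0P; exists q; apply: hPBin; rewrite inE eqxx.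
have hm1 : 0 < m.
  rewrite /m sizes sizexs; move: Bpos h2.
  move: #|A :\: _| #|B| => u v; lia.
have hm2 : m <= size (q :: pb').
  move: h1; rewrite /m size_cat -sizexs -sizeys; lia.
have takeQ : take m s = take m (q :: pb') by rewrite /s takel_cat.
set bs := drop m s.
have sizebs : size bs = size xs by rewrite size_drop /m sizes sizexs; lia.
have hab : forall a b, a \in A -> b \in B -> e a b && e b a.
  by move=> a b ha hb; rewrite hcomplete // e_sym hcomplete.
have [m' Em] : exists m', m = m'.+1 by exists m.-1; lia.
set Q' := take m' pb'.
have QE : take m (q :: pb') = q :: Q' by rewrite Em.
exists ((pa :: pa') ++ (q :: Q') ++ alt xs bs).
have perm1 : perm_eq ((pa :: pa') ++ (q :: Q') ++ alt xs bs) (((pa :: pa') ++ xs) ++ s).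
  rewrite -catA perm_cat2l -QE -takeQ -{2}(cat_take_drop m s) -/bs.
  by rewrite perm_sym perm_catCA perm_cat2l perm_sym alt_perm.
have uc : uniq (((pa :: pa') ++ xs) ++ s).
  rewrite cat_uniq us andbT; apply/andP; split.
    rewrite cat_uniq; apply/and3P; split => //; last exact: enum_uniq.
    by apply/hasPn => x; rewrite memxs; case/andP.
  apply/hasPn => x; rewrite ms => xB; rewrite mem_cat memxs negb_or.
  apply/andP; split; apply/negP => h.
    by apply: (dis x) => //; apply: hPAin.
  by apply: (dis x) => //; case/andP: h.
have mc : forall x, (x \in ((pa :: pa') ++ xs) ++ s) = (x \in A :|: B).
  move=> x; rewrite mem_cat ms mem_cat memxs in_setU.
  case: (boolP (x \in pa :: pa')) => h /=; first by rewrite (hPAin _ h).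
  by rewrite andbT.
have lastQ : last q Q' \in B.
  apply: hPBin; have : last q Q' \in q :: Q' by exact: mem_last.
  by rewrite -QE => /mem_take.
have allxs : all (mem A) xs by apply/allP => x; rewrite memxs => /andP[].
have allbs : all (mem B) bs.
  by apply/allP => x /mem_drop; rewrite ms.
have [palt lastalt] := andP (alt_path hab lastQ allxs allbs (esym sizebs)).
have lastPA : last pa pa' \in A by apply: hPAin; exact: mem_last.
split; last split.
- rewrite /is_cycle (perm_uniq perm1) uc /= size_cat /=; apply/orP; right.
  rewrite rcons_cat cat_path pPA /= rcons_cat cat_path rcons_path /=.
  rewrite (andP (hab _ _ lastPA (hPBin _ (mem_head _ _)))).1 palt.
  rewrite (andP (hab _ _ (hPAin _ (mem_head _ _)) lastalt)).2 !andbT.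
  apply/and3P; split; [by rewrite addnS | by [] | exact: (take_path m' pPB)].
- by move=> x; rewrite (perm_mem perm1) mc.
- by apply/setP => x; rewrite inE (perm_mem perm1) mc.
Qed.
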